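(* Let $G$ be a finite simple connected nonbipartite graph with edge ideal $I(G)\subseteq S=K[x_1,\ldots,x_n]$. Then $$\mathrm{dstab}(I(G))\le\min\{d_H : H \text{ is a spanning unicyclic nonbipartite subgraph of } G\}.$$
   Context: $K$ is a field and the vertices of $G$ are the variables $x_1,\ldots,x_n$; $I(G)$ is generated by the monomials $x_ix_j$ with $\{x_i,x_j\}\in E(G)$. For an ideal $I\subseteq S$, $\mathrm{dstab}(I)=\min\{t\ge0:\mathrm{depth}(I^t)=\mathrm{depth}(I^{t+i})\text{ for all }i\ge0\}$. A spanning subgraph of $G$ is a connected subgraph with the same vertex set as $G$; a spanning unicyclic nonbipartite subgraph is a spanning subgraph containing exactly one cycle, which has odd length. For such $H$ with unique cycle of length $2k+1$, let $E^*(H)$ be the set of edges of $H$ not on that cycle that are not leaves of $H$ (an edge $y_1y_2$ is a leaf of $H$ if $y_1$ or $y_2$ is adjacent to exactly one vertex in $H$), and set $d_H=|E^*(H)|+k+1$. *)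

(* Defs.v *)
From mathcomp Require Import all_boot all_algebra.
From mathcomp Require Import mpoly.
Set Implicit Arguments. Unset Strict Implicit. Unset Printing Implicit Defensive.
Import GRing.Theory.
Local Open Scope ring_scope.

Definition in_ideal (R : comNzRingType) (gs : seq R) (p : R) : Prop :=
  exists cs : seq R, p = \sum_(i < size gs) cs`_i * gs`_i.

Fixpoint pow_gens (R : comNzRingType) (gs : seq R) (t : nat) : seq R :=
  match t with
  | 0 => [:: 1]
  | t'.+1 => [seq a * b | a <- gs, b <- pow_gens gs t']
  end.

Definition in_smod (R : comNzRingType) (fs : seq R) (M : R -> Prop) (p : R) : Prop :=
  exists ms : seq R, (forall j, (j < size fs)%N -> M ms`_j) /\
    p = \sum_(j < size fs) fs`_j * ms`_j.

(* fs is an M-regular sequence contained in the ideal m: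
   each f_(k+1) is a nonzerodivisor on M/(f_1..f_k)M, and M/(fs)M <> 0 *)
Definition is_regseq (R : comNzRingType) (m M : R -> Prop) (fs : seq R) : Prop :=
  [/\ forall j, (j < size fs)%N -> m fs`_j,
      forall k, (k < size fs)%N -> forall g, M g ->
        in_smod (take k fs) M (fs`_k * g) -> in_smod (take k fs) M g
    & exists g, M g /\ ~ in_smod fs M g].

Definition has_regseq (R : comNzRingType) (m M : R -> Prop) (r : nat) : Prop :=
  exists fs : seq R, size fs = r /\ is_regseq m M fs.

Definition max_ideal (K : fieldType) (n : nat) : {mpoly K[n]} -> Prop :=
  in_ideal [seq 'X_i | i <- enum 'I_n].

(* depth(M) = depth(N), for S-modules M, N (given as ideals, i.e. predicates on S):
   depth is the (common) length of maximal M-regular sequences in (x_1..x_n),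
   so equality of depths is equality of the sets of lengths of regular sequences. *)
Definition same_depth (K : fieldType) (n : nat) (M N : {mpoly K[n]} -> Prop) : Prop :=
  forall r, has_regseq (@max_ideal K n) M r <-> has_regseq (@max_ideal K n) N r.

Definition ideal_pow (K : fieldType) (n : nat) (gs : seq {mpoly K[n]}) (t : nat) :
  {mpoly K[n]} -> Prop := in_ideal (pow_gens gs t).

(* dstab(I) <= d, where dstab(I) = min{t : depth(I^t) = depth(I^(t+i)) for all i} *)
Definition dstab_le (K : fieldType) (n : nat) (gs : seq {mpoly K[n]}) (d : nat) : Prop :=
  exists t, (t <= d)%N /\
    forall i, same_depth (ideal_pow gs t) (ideal_pow gs (t + i)).

Definition simple_graph (n : nat) (G : rel 'I_n) : Prop :=
  ssrbool.symmetric G /\ ssrbool.irreflexive G.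

Definition connected_graph (n : nat) (G : rel 'I_n) : Prop :=
  forall x y, connect G x y.

Definition bipartite (n : nat) (G : rel 'I_n) : Prop :=
  exists f : 'I_n -> bool, forall x y, G x y -> f x != f y.

Definition edge_gens (K : fieldType) (n : nat) (G : rel 'I_n) : seq {mpoly K[n]} :=
  [seq 'X_i * 'X_j | i <- enum 'I_n, j <- [seq j <- enum 'I_n | G i j]].

Definition edges (n : nat) (H : rel 'I_n) : {set {set 'I_n}} :=
  [set e : {set 'I_n} | [exists x, exists y, H x y && (e == [set x; y])]].

Definition degree (n : nat) (H : rel 'I_n) (v : 'I_n) : nat := #|[set u | H v u]|.

Definition is_cycle (n : nat) (H : rel 'I_n) (c : seq 'I_n) : Prop :=
  (2 < size c)%N /\ uniq c /\ cycle H c.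

Definition cycle_edges (n : nat) (c : seq 'I_n) : {set {set 'I_n}} :=
  match c with
  | [::] => set0
  | x0 :: _ => [set [set nth x0 c i; nth x0 (rcons (behead c) x0) i] | i : 'I_(size c)]
  end.

(* H is a spanning unicyclic nonbipartite subgraph of G, whose unique cycle is c:
   H is a simple graph on the same vertex set, its edges are edges of G, it is connected,
   c is a cycle of H, every cycle of H has the same edges as c (exactly one cycle),
   and c has odd length *)
Definition spanning_unicyclic_nonbip (n : nat) (G H : rel 'I_n) (c : seq 'I_n) : Prop :=
  [/\ simple_graph H, subrel H G, connected_graph H,
      is_cycle H c &
    (
      (forall c', is_cycle H c' -> cycle_edges c' = cycle_edges c)
    /\ odd (size c))].

Definition Estar (n : nat) (H : rel 'I_n) (c : seq 'I_n) : {set {set 'I_n}} :=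
  [set e in edges H | (e \notin cycle_edges c) && [forall v in e, degree H v != 1%N]].

(* d_H = |E*(H)| + k + 1, where the cycle has length 2k+1 *)
Definition d_H (n : nat) (H : rel 'I_n) (c : seq 'I_n) : nat :=
  (#|Estar H c| + (size c).-1./2 + 1)%N.

(* Main.v *)
Require Import Defs.
From mathcomp Require Import all_boot all_algebra.
From mathcomp Require Import mpoly.
From mathcomp Require Import ring zify.
Set Implicit Arguments. Unset Strict Implicit. Unset Printing Implicit Defensive.
Import GRing.Theory.
Local Open Scope ring_scope.


Section Alg.
Context (R : comNzRingType).
Implicit Types (gs : seq R).

Lemma in_ideal0 gs : in_ideal gs 0.
Proof. by exists [::]; rewrite big1 // => i _; rewrite nth_nil mul0r. Qed.

Lemma in_idealD gs p q : in_ideal gs p -> in_ideal gs q -> in_ideal gs (p + q).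
Proof.
move=> [c1 ->] [c2 ->]; exists (mkseq (fun i => c1`_i + c2`_i) (size gs)).
rewrite -big_split /=; apply: eq_bigr => i _.
by rewrite nth_mkseq // mulrDl.
Qed.

Lemma in_idealM gs r p : in_ideal gs p -> in_ideal gs (r * p).
Proof.
move=> [c ->]; exists (map (fun x => r * x) c).
rewrite mulr_sumr; apply: eq_bigr => i _.
case: (ltnP i (size c)) => hi; first by rewrite (nth_map 0) // mulrA.
by rewrite [nth _ (map _ _) _]nth_default ?size_map // (nth_default 0 hi) !mul0r mulr0.
Qed.

Lemma in_ideal_gen gs g : g \in gs -> in_ideal gs g.
Proof.
move=> hg; exists (mkseq (fun i => (i == index g gs)%:R) (size gs)).
have hi : (index g gs < size gs)%N by rewrite index_mem.
rewrite (bigD1 (Ordinal hi)) //= nth_mkseq // eqxx mul1r nth_index //.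
rewrite big1 ?addr0 // => i /eqP hi2; rewrite nth_mkseq //.
have -> : (i == index g gs :> nat) = false.
  by apply/negbTE; apply/eqP => e; apply: hi2; apply: val_inj.
by rewrite mul0r.
Qed.


Lemma in_ideal_ind gs (P : R -> Prop) :
  P 0 -> (forall p q, P p -> P q -> P (p + q)) -> (forall r p, P p -> P (r * p)) ->
  (forall g, g \in gs -> P g) -> forall p, in_ideal gs p -> P p.
Proof.
move=> P0 PD PM Pg p [c ->].
elim/big_ind: _ => // i _; apply: PM; apply: Pg; exact: mem_nth.
Qed.

Lemma pow_gens_mul gs s t a b : a \in pow_gens gs s -> b \in pow_gens gs t ->
  a * b \in pow_gens gs (s + t).
Proof.
elim: s a => [|s IH] a /=; first by rewrite inE => /eqP -> ; rewrite mul1r.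
move=> /allpairsP [[x y] /= [hx hy ->]] hb.
rewrite -mulrA; apply/allpairsP; exists (x, y * b) => /=; split => //; exact: IH.
Qed.

Definition ip gs t := in_ideal (pow_gens gs t).

Lemma ipM gs s t p q : ip gs s p -> ip gs t q -> ip gs (s + t) (p * q).
Proof.
move=> hp; elim/in_ideal_ind: hp q.
- by move=> q _; rewrite mul0r; apply: in_ideal0.
- by move=> a b ha hb q hq; rewrite mulrDl; apply: in_idealD; [apply: ha|apply: hb].
- by move=> r a ha q hq; rewrite -mulrA; apply: in_idealM; apply: ha.
move=> g hg q hq; elim/in_ideal_ind: hq.
- by rewrite mulr0; apply: in_ideal0.
- by move=> a b ha hb; rewrite mulrDr; apply: in_idealD.
- by move=> r a ha; rewrite mulrCA; apply: in_idealM.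
by move=> h hh; apply: in_ideal_gen; apply: pow_gens_mul.
Qed.

Lemma ip0 gs p : ip gs 0 p.
Proof. by rewrite -[p]mulr1; apply: in_idealM; apply: in_ideal_gen; rewrite inE. Qed.

Lemma ip1 gs g : g \in gs -> ip gs 1 g.
Proof.
move=> hg; apply: in_ideal_gen => /=; apply/flattenP; exists [:: g * 1].
  by apply/mapP; exists g.
by rewrite mulr1 inE.
Qed.

Lemma ip_prod gs (I : eqType) (s : seq I) (F : I -> R) :
  (forall i, i \in s -> ip gs 1 (F i)) -> ip gs (size s) (\prod_(i <- s) F i).
Proof.
elim: s => [|a s IH] H; first by rewrite big_nil; apply: ip0.
rewrite big_cons /= -add1n; apply: ipM; first by apply: H; rewrite inE eqxx.
by apply: IH => i hi; apply: H; rewrite inE hi orbT.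
Qed.

Lemma ip_exp gs g m : g \in gs -> ip gs m (g ^+ m).
Proof.
move=> hg; elim: m => [|m IH]; first exact: ip0.
by rewrite exprS -add1n; apply: ipM => //; apply: ip1.
Qed.

End Alg.


Section Cyc.
Context (K : fieldType) (n : nat) (G : rel 'I_n).
Local Notation S := {mpoly K[n]}.
Local Notation X i := ('X_i : S).
Local Notation I t := (ip (@edge_gens K n G) t).
Definition prodX (s : seq 'I_n) : S := \prod_(v <- s) X v.

Lemma edge_in i j : G i j -> X i * X j \in @edge_gens K n G.
Proof.
move=> hij; apply/allpairsPdep; exists i, j; split => //.
  by rewrite mem_enum.
by rewrite mem_filter hij mem_enum.
Qed.

Lemma edgeI i j : G i j -> I 1%N (X i * X j).
Proof. by move=> h; apply: ip1; apply: edge_in. Qed.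

Lemma path_even l x s : path G x s -> size s = l.*2 -> I l (prodX s).
Proof.
elim: l x s => [|l IH] x s.
  by case: s => // _ _; apply: ip0.
case: s => [|y [|z s]] //=; try by rewrite doubleS.
move=> /and3P [_ hyz hp]; rewrite doubleS => -[hs].
rewrite /prodX !big_cons mulrA -add1n; apply: ipM; first exact: edgeI.
exact: (IH z).
Qed.

Lemma cycle_lemmas (c : seq 'I_n) k : cycle G c -> size c = k.*2.+1 ->
  (2 < size c)%N -> forall v, v \in c ->
  (exists P, prodX c = X v * P /\ I k P) /\ I k.+1 (X v * prodX c).
Proof.
move=> hc hs h3 v hv; case: (rot_to hv) => i p hrot.
have hpc : prodX c = prodX (v :: p).
  by rewrite /prodX -hrot; apply: perm_big; rewrite perm_sym perm_rot.
have hcyc : cycle G (v :: p) by rewrite -hrot rot_cycle.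
have hsp : size p = k.*2 by move: hs; rewrite -(size_rot i) hrot /= => -[].
move: hcyc; rewrite /= rcons_path => /andP [hp hlast].
split.
  by exists (prodX p); split; [rewrite hpc /prodX big_cons | exact: (path_even hp)].
case: k hs hsp h3 => [|k] hs hsp h3; first by rewrite hs in h3.
clear hrot; case: p hp hlast hpc hsp => [|y p] //= /andP [hvy hp] hlast hpc [hsp].
case/lastP: p hp hlast hpc hsp => [|mid z] hp hlast hpc hsp.
  by [] .
rewrite size_rcons in hsp; case: hsp => hsp.
rewrite last_rcons in hlast.
have -> : X v * prodX c = (X v * X y) * ((X z * X v) * prodX mid).
  by rewrite hpc /prodX !big_cons -cats1 big_cat big_seq1 /=; ring.
rewrite -add1n -[k.+1]add1n; apply: ipM; first exact: edgeI.
apply: ipM; first exact: edgeI.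
move: hp; rewrite rcons_path => /andP [hp _].
exact: (path_even hp).
Qed.

Fixpoint prodE (x : 'I_n) (s : seq 'I_n) : S :=
  if s is y :: s' then X x * X y * prodE y s' else 1.

Lemma AB (xC : S) k (inC : pred 'I_n)
  (C1 : forall v, inC v -> exists P, xC = X v * P /\ I k P)
  (C2 : forall v, inC v -> I k.+1 (X v * xC)) :
  forall u p, path G u p -> inC (last u p) ->
   I (size p + k + 1) (X u * xC * prodE u p) /\
   (forall y p', p = y :: p' -> I (size p + k) (X u * xC * prodE y p')).
Proof.
suff H : forall N u p, (size p <= N)%N -> path G u p -> inC (last u p) ->
   I (size p + k + 1) (X u * xC * prodE u p) /\
   (forall y p', p = y :: p' -> I (size p + k) (X u * xC * prodE y p')).
  by move=> u p; apply: (H (size p)).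
elim=> [|N IH] u [|y p] //=.
- by move=> _ _ hu; split => //; rewrite mulr1 addn1; apply: C2.
- by move=> _ _ hu; split => //; rewrite mulr1 addn1; apply: C2.
move=> hs /andP [huy hp] hl.
have hB : I ((size p).+1 + k) (X u * xC * prodE y p).
  case: p hs hp hl => [|z p] /= hs.
    move=> _ hy; case: (C1 _ hy) => P [-> hP].
    rewrite mulr1 mulrA add1n -add1n; apply: ipM => //; exact: edgeI.
  move=> /andP [hyz hp] hl.
  have [hA _] := IH z p (ltnW hs) hp hl.
  have -> : X u * xC * (X y * X z * prodE z p) = (X u * X y) * (X z * xC * prodE z p) by ring.
  have -> : ((size p).+2 + k = 1 + (size p + k + 1))%N by rewrite addn1 add1n addSn.
  apply: ipM => //; exact: edgeI.
split; last by move=> y' p' [<- <-].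
have -> : X u * xC * (X u * X y * prodE y p) = (X u * X y) * (X u * xC * prodE y p) by ring.
have -> : ((size p).+1 + k + 1 = 1 + ((size p).+1 + k))%N by rewrite addn1 add1n.
apply: ipM => //; exact: edgeI.
Qed.
End Cyc.


Section Reg.
Context (R : idomainType) (mx M : R -> Prop).
Hypothesis M0 : M 0.

Lemma smod_nil p : in_smod [::] M p <-> p = 0.
Proof.
split; first by case=> ms [_ ->]; rewrite big_ord0.
by move=> ->; exists [::]; split => //; rewrite big_ord0.
Qed.

Lemma smod_one f p : in_smod [:: f] M p <-> exists m, M m /\ p = f * m.
Proof.
split.
  by case=> ms [hm ->]; exists ms`_0; split; [apply: hm | rewrite big_ord1].
by case=> m [hm ->]; exists [:: m]; split; [case | rewrite big_ord1].
Qed.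

Lemma depth_one (w f0 g0 : R) :
  ~ M w -> (forall f, mx f -> M (f * w)) ->
  mx f0 -> f0 != 0 -> M g0 -> (forall m, M m -> g0 <> f0 * m) ->
  forall r, has_regseq mx M r <-> (r <= 1)%N.
Proof.
move=> Hw Hsoc Hf0 Hf0nz Hg0 Hg0n r; split.
  case=> fs [<- [H1 H2 H3]]; rewrite leqNgt; apply/negP => hs.
  have h0 : (0 < size fs)%N by apply: ltn_trans hs.
  case: fs hs H1 H2 H3 h0 => [|f1 [|f2 fs]] // _ H1 H2 H3 _.
  have hf1 : mx f1 by apply: (H1 0%N).
  have hf2 : mx f2 by apply: (H1 1%N).
  have f1nz : f1 != 0.
    apply/eqP => f10.
    have := H2 0%N isT g0 Hg0; rewrite /= smod_nil smod_nil f10 mul0r => /(_ erefl).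
    by move=> g00; apply: (Hg0n 0 M0); rewrite mulr0.
  have := H2 1%N isT (f1 * w) (Hsoc _ hf1); rewrite /= !smod_one.
  case.
    exists (f2 * w); split; first exact: Hsoc.
    by rewrite mulrCA.
  move=> m [hm /(mulfI f1nz) e]; apply: Hw; by rewrite e.
case: r => [|[|r]] // _.
  exists [::]; split => //; split; [by move=> j | by move=> j | ].
  exists g0; split => //; rewrite smod_nil => g00.
  by apply: (Hg0n 0 M0); rewrite mulr0.
exists [:: f0]; split => //; split.
- by case.
- case=> // _ g hg; rewrite /= !smod_nil => /eqP; rewrite mulf_eq0 (negbTE Hf0nz) /=.
  by move/eqP.
- exists g0; split => //; rewrite smod_one; case=> m [hm e].
  exact: (Hg0n m hm e).
Qed.
End Reg.


Section Deg.
Context (K : fieldType) (n : nat) (G : rel 'I_n).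
Local Notation S := {mpoly K[n]}.
Local Notation X i := ('X_i : S).
Local Notation I t := (ip (@edge_gens K n G) t).

Definition phi (p : S) : {poly K} := mmap (@polyC K) (fun _ => 'X) p.

Lemma phiM p q : phi (p * q) = phi p * phi q.
Proof. by rewrite /phi rmorphM. Qed.
Lemma phiD p q : phi (p + q) = phi p + phi q.
Proof. by rewrite /phi rmorphD. Qed.
Lemma phi0 : phi 0 = 0.
Proof. by rewrite /phi rmorph0. Qed.
Lemma phi1 : phi 1 = 1.
Proof. by rewrite /phi rmorph1. Qed.
Lemma phiX i : phi (X i) = 'X.
Proof. by rewrite /phi mmapX mmap1U. Qed.

Lemma phi_gens t g : g \in pow_gens (@edge_gens K n G) t -> phi g = 'X^(t.*2).
Proof.
elim: t g => [|t IH] g /=; first by rewrite inE => /eqP ->; rewrite phi1 expr0.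
move=> /allpairsP [[a b] /= [ha hb ->]].
rewrite phiM (IH _ hb); move: ha => /allpairsPdep [i [j [_ _ ->]]].
by rewrite phiM !phiX doubleS !exprS mulrA.
Qed.

Lemma phi_ip t p : I t p -> exists q, phi p = q * 'X^(t.*2).
Proof.
elim/in_ideal_ind.
- by exists 0; rewrite phi0 mul0r.
- by move=> a b [qa ha] [qb hb]; exists (qa + qb); rewrite phiD ha hb mulrDl.
- by move=> r a [qa ha]; exists (phi r * qa); rewrite phiM ha mulrA.
by move=> g hg; exists 1; rewrite mul1r (phi_gens hg).
Qed.

Lemma phi_notin t p : (0 < t)%N -> phi p = 'X^((t.*2).-1) -> ~ I t p.
Proof.
move=> ht hp /phi_ip [q]; rewrite hp => /(congr1 (fun r : {poly K} => r`_((t.*2).-1))).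
rewrite coefXn eqxx coefMXn.
have -> : ((t.*2).-1 < t.*2)%N by rewrite prednK ?double_gt0 // ltnSn.
by move/eqP; rewrite oner_eq0.
Qed.
End Deg.


Section Gr.
Context (n : nat) (H : rel 'I_n) (Hsym : ssrbool.symmetric H) (Hirr : irreflexive H) (c : seq 'I_n)
  (Hc3 : (2 < size c)%N) (Hcu : uniq c) (Hcyc : cycle H c).

Lemma deg2 v a b : a != b -> H v a -> H v b -> degree H v != 1%N.
Proof.
move=> hab ha hb; rewrite /degree; apply/eqP => h1.
have : (#|[set a; b]| <= #|[set u | H v u]|)%N.
  apply: subset_leq_card; apply/subsetP => u; rewrite !inE => /orP [] /eqP ->; by [].
by rewrite h1 cards2 hab.
Qed.

Lemma deg_c v : v \in c -> degree H v != 1%N.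
Proof.
move=> hv; case: (rot_to hv) => i p hrot.
have hcyc : cycle H (v :: p) by rewrite -hrot rot_cycle.
have hu : uniq (v :: p) by rewrite -hrot rot_uniq.
have hs : size p = (size c).-1 by rewrite -(size_rot i c) hrot.
case: p hrot hcyc hu hs => [|a p] _; first by move=> _ _ /= hs; have := Hc3; move: hs; case: (size c) => [|[|[|m]]].
case/lastP: p => [|mid b]; first by move=> _ _ /= hs; have := Hc3; move: hs; case: (size c) => [|[|[|m]]].
move=> /= /andP [hva]; rewrite rcons_path last_rcons => /andP [_ hbv] /and3P [_ hu _] _.
apply: (@deg2 v a b) => //; last by rewrite Hsym.
by apply/eqP => eab; move: hu; rewrite eab mem_rcons inE eqxx.
Qed.

Lemma cedges_sub e v : e \in cycle_edges c -> v \in e -> v \in c.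
Proof.
case: c Hc3 => [|x0 s] // _ /imsetP [i _ ->]; rewrite inE => /orP [] /set1P ->.
  by apply: mem_nth.
by rewrite /= -mem_rcons; apply: mem_nth; rewrite size_rcons.
Qed.

Fixpoint pe (x : 'I_n) (s : seq 'I_n) : seq {set 'I_n} :=
  if s is y :: s' then [set x; y] :: pe y s' else [::].

Lemma size_pe x s : size (pe x s) = size s.
Proof. by elim: s x => //= y s IH x; rewrite IH. Qed.

Lemma pe_sub x s e v : e \in pe x s -> v \in e -> v \in x :: s.
Proof.
elim: s x => //= y s IH x; rewrite inE => /orP [/eqP -> | he].
  by rewrite !inE => /orP [] ->; rewrite ?orbT.
by move=> hv; rewrite in_cons (IH y he hv) orbT.
Qed.

Lemma pe_uniq x s : uniq (x :: s) -> uniq (pe x s).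
Proof.
elim: s x => //= y s IH x /andP [hx /andP [hy hs]].
rewrite IH ?hy ?hs // andbT; apply/negP => hin.
have := pe_sub hin (set21 x y); rewrite inE.
by move: hx; rewrite inE negb_or => /andP [/negbTE -> /negbTE ->].
Qed.

Lemma edges_pe x s e : path H x s -> e \in pe x s -> e \in edges H.
Proof.
elim: s x => //= y s IH x /andP [hxy hp]; rewrite inE => /orP [/eqP -> | he].
  by rewrite inE; apply/existsP; exists x; apply/existsP; exists y; rewrite hxy eqxx.
exact: IH hp he.
Qed.

Lemma deg_next x y s : path H x (y :: s) -> uniq (x :: y :: s) -> last x (y :: s) \in c ->
  degree H y != 1%N.
Proof.
case: s => [|z s] /=; first by move=> _ _; apply: deg_c.
move=> /and3P [hxy hyz _] /andP [hx _] _.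
apply: (@deg2 y x z) => //; last by rewrite Hsym.
by apply/eqP => exz; move: hx; rewrite exz !inE eqxx !orbT.
Qed.

Lemma pe_good x s : path H x s -> uniq (x :: s) -> last x s \in c ->
  (forall v, v \in belast x s -> v \notin c) -> degree H x != 1%N ->
  forall e, e \in pe x s -> e \in Estar H c.
Proof.
elim: s x => //= y s IH x hp hu hl hb hdx e.
have hdy := deg_next hp hu hl.
move: hp hu => /= /andP [hxy hp] /andP [_ hu].
rewrite inE => /orP [/eqP -> | he]; last first.
  apply: (IH y) => // v hv; apply: hb; by rewrite inE hv orbT.
rewrite inE; apply/and3P; split.
- by rewrite inE; apply/existsP; exists x; apply/existsP; exists y; rewrite hxy eqxx.
- apply/negP => hce; have := cedges_sub hce (set21 x y).
  by have := hb x; rewrite inE eqxx => /(_ isT) /negbTE ->.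
- by apply/forall_inP => v; rewrite !inE => /orP [] /eqP ->.
Qed.

Lemma cut_path x p : path H x p -> uniq (x :: p) -> last x p \in c -> x \notin c ->
  exists q, [/\ path H x q, uniq (x :: q), last x q \in c,
    (forall v, v \in belast x q -> v \notin c) & {subset q <= p}].
Proof.
elim: p x => [|y p IH] x /=; first by move=> _ _ ->.
move=> /andP [hxy hp] /andP [hx hu] hl hxc.
case hyc: (y \in c).
  exists [:: y]; split => //=.
  - by rewrite hxy.
  - by rewrite andbT inE; apply/eqP => exy; move: hx; rewrite exy inE eqxx.
  - by move=> v; rewrite inE => /eqP ->.
  - by move=> v; rewrite inE => /eqP ->; rewrite inE eqxx.
have [q [hq1 hq2 hq3 hq4 hq5]] := IH y hp hu hl (negbT hyc).
exists (y :: q); split => /=.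
- by rewrite hxy hq1.
- apply/andP; split; last exact: hq2.
  apply/negP; rewrite in_cons => /orP [/eqP exy| hxq].
    by move: hx; rewrite exy in_cons eqxx.
  by move: hx; rewrite in_cons (hq5 _ hxq) orbT.
- exact: hq3.
- by move=> v; rewrite inE => /orP [/eqP -> // | ]; apply: hq4.
- by move=> v; rewrite !in_cons => /orP [->|/hq5 ->]; rewrite ?orbT.
Qed.
End Gr.


Lemma split_prod (T : finType) (R : comNzRingType) (A : {set T}) (s : seq T) (F : T -> R) :
  uniq s -> {subset s <= A} ->
  exists r, [/\ {subset r <= A}, (size s + size r = #|A|)%N &
     \prod_(e in A) F e = \prod_(e <- s) F e * \prod_(e <- r) F e].
Proof.
move=> us sA.
have hp : perm_eq [seq e <- enum A | e \in s] s.
  apply: uniq_perm => //; first by apply: filter_uniq; apply: enum_uniq.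
  move=> e; rewrite mem_filter mem_enum.
  case hes: (e \in s) => //=. exact: (sA e hes).
exists [seq e <- enum A | e \notin s]; split.
- move=> e. rewrite mem_filter mem_enum. by case/andP.
- rewrite -(perm_size hp) !size_filter cardE.
  exact: (count_predC (mem s)).
- have hc : perm_eq (enum A) ([seq e <- enum A | e \in s] ++ [seq e <- enum A | e \notin s]).
    by rewrite perm_sym; apply/permPl; apply: (perm_filterC (mem s)).
  rewrite -big_enum (perm_big _ hc) big_cat /=.
  by rewrite (perm_big _ hp).
Qed.

Section Main.
Context (K : fieldType) (n : nat) (G H : rel 'I_n) (c : seq 'I_n)
 (Hsym : ssrbool.symmetric H) (Hirr : irreflexive H) (Hsub : subrel H G)
 (Hconn : connected_graph H)
 (Hc3 : (2 < size c)%N) (Hcu : uniq c) (Hcyc : cycle H c) (Hodd : odd (size c)).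
Local Notation S := {mpoly K[n]}.
Local Notation X i := ('X_i : S).
Local Notation I t := (ip (@edge_gens K n G) t).

Definition emon (e : {set 'I_n}) : S := \prod_(v in e) X v.

Lemma emon2 x y : x != y -> emon [set x; y] = X x * X y.
Proof. by move=> hxy; rewrite /emon big_setU1 ?in_set1 // big_set1.


Qed.

Lemma emon_edge e : e \in edges H -> I 1%N (emon e).
Proof.
rewrite inE => /existsP [x /existsP [y /andP [hxy /eqP ->]]].
have nxy : x != y by apply/eqP => exy; move: hxy; rewrite exy Hirr.
rewrite emon2 //; apply: edgeI; exact: Hsub.
Qed.

Lemma prodE_pe x s : path H x s -> prodE K x s = \prod_(e <- pe x s) emon e.
Proof.
elim: s x => [|y s IH] x /=; first by rewrite big_nil.
move=> /andP [hxy hp]; rewrite big_cons IH // emon2 //.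
by apply/eqP => exy; move: hxy; rewrite exy Hirr.
Qed.

Lemma prod_Estar : I #|Estar H c| (\prod_(e in Estar H c) emon e).
Proof.
rewrite -big_enum cardE; apply: ip_prod => e; rewrite mem_enum inE => /andP [he _].
exact: emon_edge.
Qed.

Definition kc := (size c)./2.
Lemma hk : size c = kc.*2.+1.
Proof. by rewrite -{1}(odd_double_half (size c)) Hodd add1n. Qed.

Lemma dH_eq : d_H H c = (#|Estar H c| + kc + 1)%N.
Proof. by rewrite /d_H hk /= doubleK. Qed.

Definition wit : S := prodX K c * \prod_(e in Estar H c) emon e.

Lemma cycG : cycle G c.
Proof. by apply: (sub_cycle Hsub). Qed.

Lemma C1 v : v \in c -> exists P, prodX K c = X v * P /\ I kc P.
Proof. by move=> hv; case: (cycle_lemmas K cycG hk Hc3 hv). Qed.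

Lemma C2 v : v \in c -> I kc.+1 (X v * prodX K c).
Proof. by move=> hv; case: (cycle_lemmas K cycG hk Hc3 hv). Qed.

Lemma wit_soc j : I (d_H H c) (X j * wit).
Proof.
rewrite dH_eq /wit.
case hjc: (j \in c).
  rewrite mulrA; have -> : (#|Estar H c| + kc + 1 = kc.+1 + #|Estar H c|)%N by lia.
  apply: ipM; [exact: C2 | exact: prod_Estar].
have [q [hq1 hq2 hq3 hq4 _]] : exists q, [/\ path H j q, uniq (j :: q), last j q \in c,
    (forall v, v \in belast j q -> v \notin c) & {subset q <= q}].
  case: c Hc3 hjc Hcyc Hcu => [|c0 cs] // _ hjc _ _.
  have := Hconn j c0; case/connectP => p hp hl.
  have : last j p \in c0 :: cs by rewrite -hl inE eqxx.
  case: (shortenP hp) => p' hp' hu _ hl'.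
  have [q [h1 h2 h3 h4 _]] := cut_path hp' hu hl' (negbT hjc).
  by exists q; split.
have hqG : path G j q by apply: (sub_path Hsub).
have [hA hB] := AB (inC := mem c) C1 C2 hqG hq3.
case: q hq1 hq2 hq3 hq4 hqG hA hB => [|y q'] hq1 hq2 hq3 hq4 hqG hA hB.
  by move: hq3; rewrite /= hjc.
case hdj: (degree H j == 1%N).
  have hu : uniq (y :: q') by move: hq2 => /= /andP [].
  have hgood : forall e, e \in pe y q' -> e \in Estar H c.
    have /= /andP [_ hp1] := hq1.
    apply: (pe_good Hsym Hc3 Hcu Hcyc hp1 hu) => //.
    - by move=> v hv; apply: hq4; rewrite /= inE hv orbT.
    - exact: (deg_next Hsym Hc3 Hcu Hcyc hq1 hq2 hq3).
  have [r [hr1 hr2 hr3]] := split_prod emon (pe_uniq hu) hgood.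
  rewrite hr3 size_pe in hr2 *.
  have /= /andP [_ hp1] := hq1; rewrite -(prodE_pe hp1).
  have -> : X j * (prodX K c * (prodE K y q' * \prod_(e <- r) emon e)) =
     (X j * prodX K c * prodE K y q') * \prod_(e <- r) emon e by ring.
  have e1 : (#|Estar H c| + kc + 1 = (size (y :: q') + kc) + size r)%N.
    by rewrite -hr2 /=; lia.
  rewrite e1.
  apply: ipM; first exact: (hB y q' erefl).
  by apply: ip_prod => e he; apply: emon_edge; have := hr1 e he; rewrite inE => /andP [].
have hgood : forall e, e \in pe j (y :: q') -> e \in Estar H c.
  by apply: (pe_good Hsym Hc3 Hcu Hcyc hq1 hq2) => //; rewrite hdj.
have [r [hr1 hr2 hr3]] := split_prod emon (pe_uniq hq2) hgood.
rewrite hr3 size_pe in hr2 *.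
rewrite -(prodE_pe hq1).
have -> : X j * (prodX K c * (prodE K j (y :: q') * \prod_(e <- r) emon e)) =
   (X j * prodX K c * prodE K j (y :: q')) * \prod_(e <- r) emon e by ring.
have -> : (#|Estar H c| + kc + 1 = (size (y :: q') + kc + 1) + size r)%N by rewrite -hr2; lia.
apply: ipM; first exact: hA.
by apply: ip_prod => e he; apply: emon_edge; have := hr1 e he; rewrite inE => /andP [].
Qed.

Lemma phiXn (p : S) m : phi (p ^+ m) = phi p ^+ m.
Proof. by elim: m => [|m IH]; rewrite ?expr0 ?(@phi1 K n) // !exprS phiM IH. Qed.

Lemma phi_prodX (s : seq 'I_n) : phi (prodX K s) = 'X^(size s).
Proof.
rewrite /prodX; elim: s => [|v s IH]; first by rewrite big_nil (@phi1 K n).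
by rewrite big_cons phiM IH phiX /= exprS.
Qed.

Lemma phi_Estar : phi (\prod_(e in Estar H c) emon e) = 'X^(#|Estar H c|.*2).
Proof.
rewrite -big_enum cardE.
have : forall e, e \in enum (Estar H c) -> e \in edges H.
  by move=> e; rewrite mem_enum inE => /andP [].
elim: (enum _) => [|e l IH] he; first by rewrite big_nil (@phi1 K n).
rewrite big_cons phiM IH; last by move=> e' h; apply: he; rewrite inE h orbT.
have := he e; rewrite inE eqxx => /(_ isT).
rewrite inE => /existsP [x /existsP [y /andP [hxy /eqP ->]]].
have nxy : x != y by apply/eqP => exy; move: hxy; rewrite exy Hirr.
by rewrite emon2 // phiM !phiX /= doubleS !exprS mulrA.
Qed.

Lemma phi_wit : phi wit = 'X^((d_H H c).*2.-1).
Proof.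
rewrite /wit phiM phi_prodX phi_Estar -exprD dH_eq hk; congr ('X^_).
rewrite -!muln2; lia.
Qed.
End Main.


Theorem corollary2p8 (K : fieldType) (n : nat) (G : rel 'I_n)
  (HGs : simple_graph G) (HGc : connected_graph G) (HGnb : ~ bipartite G) :
  forall (H : rel 'I_n) (c : seq 'I_n),
    spanning_unicyclic_nonbip G H c ->
    dstab_le (@edge_gens K n G) (d_H H c).
Proof.
move=> H c [[Hsym Hirr] Hsub Hconn [Hc3 [Hcu Hcyc]] [_ Hodd]].
have key : forall i r, has_regseq (@max_ideal K n) (ideal_pow (@edge_gens K n G) (d_H H c + i)) r <-> (r <= 1)%N.
  move=> i.
  have [c0 [c1 [c2 [cs hc]]]] : exists c0 c1 c2 cs, c = [:: c0, c1, c2 & cs].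
    by move: Hc3; case: (c) => [|c0 [|c1 [|c2 cs]]] // _; exists c0, c1, c2, cs.
  have h12 : G c1 c2 by apply: Hsub; move: Hcyc; rewrite hc => /= /and3P [].
  set e0 : {mpoly K[n]} := 'X_c1 * 'X_c2.
  have he0 : e0 \in @edge_gens K n G by apply: edge_in.
  set w := wit K H c * e0 ^+ i.
  apply: (@depth_one _ _ _ (in_ideal0 _) w ('X_c0) (e0 ^+ (d_H H c + i))).
  - apply: (@phi_notin K n G (d_H H c + i)).
      by rewrite dH_eq //; lia.
    rewrite /w phiM phiXn (phi_wit K Hirr Hc3 Hcu Hcyc Hodd) /e0 phiM !phiX -expr2 -exprM -exprD.
    congr ('X^_); rewrite -!muln2.
    have : (0 < d_H H c)%N by rewrite dH_eq //; lia.
    lia.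
  - move=> f hf; elim/in_ideal_ind: hf.
    + by rewrite mul0r; apply: in_ideal0.
    + by move=> a b ha hb; rewrite mulrDl; apply: in_idealD.
    + by move=> r a ha; rewrite -mulrA; apply: in_idealM.
    move=> g /mapP [v _ ->]; rewrite /w mulrA.
    apply: ipM; first exact: (wit_soc K Hsym Hirr Hsub Hconn Hc3 Hcu Hcyc Hodd).
    exact: ip_exp.
  - by apply: in_ideal_gen; apply: map_f; rewrite mem_enum.
  - apply/eqP => h0; have := congr1 (meval (fun _ => (1 : K))) h0.
    by rewrite mevalXU meval0; apply/eqP; rewrite oner_eq0.
  - exact: ip_exp.
  move=> m _ e.
  have := congr1 (meval (fun j => if j == c0 then (0 : K) else 1)) e.
  have n01 : c0 != c1 by move: Hcu; rewrite hc /= !inE negb_or => /andP [/andP []].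
  have n02 : c0 != c2 by move: Hcu; rewrite hc /= !inE !negb_or => /andP [/and3P [] ].
  rewrite rmorphXn /e0 !rmorphM /= !mevalXU.
  rewrite eq_sym (negbTE n01) eq_sym (negbTE n02) mulr1 expr1n.
  by rewrite eqxx mul0r; move/eqP; rewrite oner_eq0.
exists (d_H H c); split => // i r.
by rewrite key -(addn0 (d_H H c)) key.
Qed.
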